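(* Let $K$ be a connected $2$-dimensional simplicial complex (with or without boundary), and let $f: K\to\mathbb{R}^3$ be a polyhedron. Then the following two statements are equivalent: (i) $f(K)$ is not embedded in $\mathbb{R}^3$, i.e. $f$ is not injective; (ii) there exist two simplices $\sigma_1,\sigma_2\in K$ with $\dim\sigma_1\leqslant 1$, and points $u_1\in\sigma_1$, $u_2\in\sigma_2$, such that $u_1\neq u_2$ and $f(u_1)=f(u_2)$.
   Context: A polyhedron is a continuous map $f: K\to\mathbb{R}^3$ from (the geometric realization of) a connected $2$-dimensional simplicial complex $K$ which is affine linear and nondegenerate (i.e. injective) on every simplex of $K$. The polyhedron is called embedded if $f$ is injective. *)

(* Defs.v *)
From HB Require Import structures.
From mathcomp Require Import all_boot all_order all_algebra.
From mathcomp Require Import reals.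
Set Implicit Arguments. Unset Strict Implicit. Unset Printing Implicit Defensive.
Import Order.TTheory GRing.Theory Num.Theory.
Local Open Scope ring_scope.

Definition is_complex (V : finType) (K : {set {set V}}) : Prop :=
  set0 \notin K /\
  (forall s t : {set V}, s \in K -> t \subset s -> t != set0 -> t \in K).

(* K is 2-dimensional: every simplex has at most 3 vertices (dim <= 2) and
   some simplex has exactly 3 vertices (dim = 2). *)
Definition dim2 (V : finType) (K : {set {set V}}) : Prop :=
  (forall s, s \in K -> #|s| <= 3)%N /\ exists s, s \in K /\ #|s| = 3%N.

Definition complex_connected (V : finType) (K : {set {set V}}) : Prop :=
  forall v w : V, [set v] \in K -> [set w] \in K ->
    connect (fun a b => [set a; b] \in K) v w.

(* Points of the geometric realization are given by barycentric coordinates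
   x : V -> R.  [in_simplex s x] : x lies in the closed geometric simplex s. *)
Definition in_simplex (R : realType) (V : finType) (s : {set V})
  (x : {ffun V -> R}) : Prop :=
  (forall v, 0 <= x v) /\ \sum_v x v = 1 /\ (forall v, v \notin s -> x v = 0).

Definition in_realization (R : realType) (V : finType) (K : {set {set V}})
  (x : {ffun V -> R}) : Prop :=
  exists2 s, s \in K & in_simplex s x.

(* The map |K| -> R^3 which is affine on each simplex, sending vertex v to p v. *)
Definition fmap (R : realType) (V : finType) (p : V -> 'rV[R]_3)
  (x : {ffun V -> R}) : 'rV[R]_3 :=
  \sum_v x v *: p v.

Definition polyhedron (R : realType) (V : finType) (K : {set {set V}})
  (p : V -> 'rV[R]_3) : Prop :=
  forall s, s \in K -> forall x y : {ffun V -> R},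
    in_simplex s x -> in_simplex s y -> fmap p x = fmap p y -> x = y.

Definition embedded (R : realType) (V : finType) (K : {set {set V}})
  (p : V -> 'rV[R]_3) : Prop :=
  forall x y : {ffun V -> R},
    in_realization K x -> in_realization K y -> fmap p x = fmap p y -> x = y.

(* Main.v *)
Require Import Defs.
From HB Require Import structures.
From mathcomp Require Import all_boot all_order all_algebra.
From mathcomp Require Import reals.
From mathcomp Require Import ring lra.
From Stdlib Require Import Classical.
Import Order.TTheory GRing.Theory Num.Theory.
Local Open Scope ring_scope.
Set Implicit Arguments. Unset Strict Implicit.
Section H.
Variables (R : realType) (V : finType).

Definition line (x d : {ffun V -> R}) (t : R) : {ffun V -> R} :=
  [ffun v => x v + t * d v].

Lemma fmap_line (p : V -> 'rV[R]_3) x d t :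
  fmap p (line x d t) = fmap p x + t *: \sum_v d v *: p v.
Proof.
rewrite /fmap scaler_sumr -big_split /=; apply: eq_bigr => v _.
by rewrite ffunE scalerDl scalerA.
Qed.

Lemma sum_line x d t : \sum_v line x d t v = \sum_v x v + t * \sum_v d v.
Proof.
rewrite mulr_sumr -big_split /=; apply: eq_bigr => v _; by rewrite ffunE.
Qed.

Lemma sum_ind (M : lmodType R) (F : V -> M) (a : V) (k : R) :
  \sum_v (k * (v == a)%:R) *: F v = k *: F a.
Proof.
rewrite (bigD1 a) //= eqxx mulr1 big1 ?addr0 // => v /negbTE ->.
by rewrite mulr0 scale0r.
Qed.

Lemma sum_ind_s (a : V) (k : R) : \sum_(v : V) k * (v == a)%:R = k.
Proof.
rewrite (bigD1 a) //= eqxx mulr1 big1 ?addr0 // => v /negbTE ->.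
by rewrite mulr0.
Qed.

Definition dir (a1 a2 a3 : V) (w0 w1 : R) : {ffun V -> R} :=
  [ffun v => w0 * (v == a2)%:R - w0 * (v == a1)%:R
           + (w1 * (v == a3)%:R - w1 * (v == a1)%:R)].

Lemma dir_fmap (p : V -> 'rV[R]_3) a1 a2 a3 w0 w1 :
  \sum_v dir a1 a2 a3 w0 w1 v *: p v = w0 *: (p a2 - p a1) + w1 *: (p a3 - p a1).
Proof.
under eq_bigr => v _ do rewrite ffunE !scalerDl !scaleNr.
rewrite !big_split /= !sumrN !sum_ind !scalerBr.
by [].
Qed.

Lemma dir_sum a1 a2 a3 w0 w1 : \sum_v dir a1 a2 a3 w0 w1 v = 0.
Proof.
under eq_bigr => v _ do rewrite ffunE.
rewrite !big_split /= !sumrN !sum_ind_s; ring.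
Qed.

Lemma dir_supp a1 a2 a3 w0 w1 v :
  v != a1 -> v != a2 -> v != a3 -> dir a1 a2 a3 w0 w1 v = 0.
Proof.
by move=> /negbTE h1 /negbTE h2 /negbTE h3; rewrite ffunE h1 h2 h3 !mulr0 !subr0 addr0.
Qed.

Lemma dir_a2 a1 a2 a3 w0 w1 :
  a1 != a2 -> a2 != a3 -> dir a1 a2 a3 w0 w1 a2 = w0.
Proof.
move=> h12 h23; rewrite ffunE eqxx eq_sym (negbTE h12) (negbTE h23).
rewrite !mulr0 !mulr1; ring.
Qed.

Lemma dir_a3 a1 a2 a3 w0 w1 :
  a2 != a3 -> a3 != a1 -> dir a1 a2 a3 w0 w1 a3 = w1.
Proof.
move=> h23 h31; rewrite ffunE eqxx eq_sym (negbTE h23) (negbTE h31).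
rewrite !mulr0 !mulr1; ring.
Qed.

Lemma sum0_sign (f : {ffun V -> R}) v : \sum_u f u = 0 -> f v != 0 ->
  (exists u, f u < 0) /\ (exists u, 0 < f u).
Proof.
move=> s0 fv; split.
- case: (boolP [exists u, f u < 0]) => [/existsP [u hu]|/existsP hn]; first by exists u.
  have h0 : forall u, true -> 0 <= f u.
    by move=> u _; rewrite leNgt; apply/negP => hu; apply: hn; exists u.
  by move: fv; rewrite (psumr_eq0P h0 s0 (i:=v)) ?eqxx.
- case: (boolP [exists u, 0 < f u]) => [/existsP [u hu]|/existsP hn]; first by exists u.
  have h0 : forall u, true -> 0 <= - f u.
    by move=> u _; rewrite oppr_ge0 leNgt; apply/negP => hu; apply: hn; exists u.
  have s0' : \sum_u - f u = 0 by rewrite sumrN s0 oppr0.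
  by move: fv; rewrite -oppr_eq0 (psumr_eq0P h0 s0' (i:=v)) ?eqxx.
Qed.
End H.
Lemma kerL (R : realType) (r0 r1 r2 r3 : 'rV[R]_3) :
  exists w0 w1 w2 w3 : R, [|| w0 != 0, w1 != 0, w2 != 0 | w3 != 0] /\
    w0 *: r0 + w1 *: r1 + w2 *: r2 + w3 *: r3 = 0.
Proof.
pose M : 'M[R]_(4,3) := \matrix_(i < 4) nth 0 [:: r0; r1; r2; r3] i.
have nf : ~~ row_free M.
  by rewrite -row_leq_rank -ltnNge (leq_ltn_trans (rank_leq_col M)).
have : kermx M != 0 by rewrite kermx_eq0.
set Kx := kermx M => nz.
have [i hi] : exists i, row i Kx != 0.
  case: (boolP [exists i, row i Kx != 0]) => [/existsP //|/existsP hn].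
  exfalso; move/negP: nz; apply; apply/eqP/row_matrixP => i.
  rewrite row0; apply/eqP; apply/negP => h; apply: hn; exists i; exact/negP.
pose w := row i Kx.
have hw : w *m M = 0 by rewrite /w -row_mul mulmx_ker row0.
move: hw; rewrite mulmx_sum_row !big_ord_recl big_ord0 addr0 !rowK /= => hw.
exists (w 0 ord0), (w 0 (lift ord0 ord0)), (w 0 (lift ord0 (lift ord0 ord0))),
  (w 0 (lift ord0 (lift ord0 (lift ord0 ord0)))); split; last first.
  by rewrite -hw !addrA.
apply/negPn/negP; rewrite !negb_or !negbK => /and4P [/eqP h0 /eqP h1 /eqP h2 /eqP h3].
move/negP: hi; apply; apply/eqP/rowP => j; rewrite mxE.
move: h0 h1 h2 h3; rewrite /w !mxE => h0 h1 h2 h3.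
case: j => [[|[|[|[|j]]]] Hj] //.
- have -> : Ordinal Hj = ord0 :> 'I_4 by apply: val_inj.
  by rewrite h0.
- have -> : Ordinal Hj = lift ord0 ord0 :> 'I_4 by apply: val_inj.
  by rewrite h1.
- have -> : Ordinal Hj = lift ord0 (lift ord0 ord0) :> 'I_4 by apply: val_inj.
  by rewrite h2.
- have -> : Ordinal Hj = lift ord0 (lift ord0 (lift ord0 ord0)) :> 'I_4 by apply: val_inj.
  by rewrite h3.
Qed.
Lemma exitL (R : realType) (I : finType) (c d : I -> R) :
  (forall i, 0 <= c i) -> (exists i, d i < 0) ->
  exists t, 0 <= t /\ (forall i, 0 <= c i + t * d i) /\
    exists i, d i < 0 /\ c i + t * d i = 0.
Proof.
move=> c0 [i0 di0].
have [i Pi Hmin] := @arg_minP _ R I i0 (fun i => d i < 0) (fun i => c i / - d i) di0.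
exists (c i / - d i); split; last split.
- apply: divr_ge0 => //; rewrite oppr_ge0; exact: ltW.
- move=> j; case: (ltrP (d j) 0) => dj.
  + have := Hmin j dj; rewrite ler_pdivlMr ?oppr_gt0 //.
    set t := c i / - d i => h. nra.
  + apply: addr_ge0 => //; apply: mulr_ge0 => //.
    apply: divr_ge0 => //; rewrite oppr_ge0; exact: ltW.
- exists i; split => //.
  have hd : - d i != 0 by rewrite oppr_eq0 ltr0_neq0.
  have := divfK hd (c i). lra.
Qed.

Definition Concl (R : realType) (V : finType) (K : {set {set V}})
  (p : V -> 'rV[R]_3) :=
   exists (s1 s2 : {set V}) (u1 u2 : {ffun V -> R}),
     [/\ s1 \in K, s2 \in K, (#|s1| <= 2)%N,
         in_simplex s1 u1 /\ in_simplex s2 u2 &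
         u1 <> u2 /\ fmap p u1 = fmap p u2].

Lemma finish (R : realType) (V : finType) (K : {set {set V}})
  (p : V -> 'rV[R]_3) (s1 s2 : {set V}) (a b : {ffun V -> R}) (v : V) :
  is_complex K -> s1 \in K -> s2 \in K -> #|s1| = 3%N -> v \in s1 -> a v = 0 ->
  in_simplex s1 a -> in_simplex s2 b -> a <> b -> fmap p a = fmap p b ->
  Concl K p.
Proof.
move=> [_ cK] h1 h2 c3 vs av [a0 [a1 a2]] ib ne fe.
have cD : #|s1 :\ v| = 2%N.
  by move: c3; rewrite (cardsD1 v) vs => -[].
exists (s1 :\ v), s2, a, b; split => //.
- apply: (cK s1) => //; first exact: subsetDl.
  by apply/eqP => e; move: cD; rewrite e cards0.
- by rewrite cD.
- split => //; split => //; split => // u.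
  rewrite in_setD1 negb_and negbK => /orP [/eqP -> //|]; exact: a2.
Qed.

Lemma core (R : realType) (V : finType) (K : {set {set V}})
  (p : V -> 'rV[R]_3) (s t : {set V}) (x y : {ffun V -> R}) :
  is_complex K -> (forall s, s \in K -> #|s| <= 3)%N ->
  s \in K -> t \in K -> in_simplex s x -> in_simplex t y -> x <> y ->
  fmap p x = fmap p y -> Concl K p.
Proof.
move=> cK d3 hs ht xs yt nxy fe.
case: (leqP #|s| 2) => cs.
  by exists s, t, x, y.
case: (leqP #|t| 2) => ct.
  by exists t, s, y, x; split => //; split => // e; apply: nxy.
have s3 : #|s| = 3%N by apply/eqP; rewrite eqn_leq d3.
have t3 : #|t| = 3%N by apply/eqP; rewrite eqn_leq d3.
have [a1 [a2 [a3 [[ia1 ia2 ia3] [n12 n23 n31]]]]] := card_gt2P cs.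
have [b1 [b2 [b3 [[ib1 ib2 ib3] [m12 m23 m31]]]]] := card_gt2P ct.
have [w0 [w1 [w2 [w3 [wnz hw]]]]] :=
  kerL (p a2 - p a1) (p a3 - p a1) (p b2 - p b1) (p b3 - p b1).
pose da := dir a1 a2 a3 w0 w1.
pose db := dir b1 b2 b3 (- w2) (- w3).
have key : \sum_v da v *: p v = \sum_v db v *: p v.
  rewrite !dir_fmap !scaleNr -opprD; apply/eqP; rewrite -addr_eq0.
  by rewrite addrA hw.
have suppa : forall v, da v != 0 -> v \in s.
  move=> v; apply: contraR => vn; apply/eqP; apply: dir_supp;
  by apply: contraNneq vn => ->.
have suppb : forall v, db v != 0 -> v \in t.
  move=> v; apply: contraR => vn; apply/eqP; apply: dir_supp;
  by apply: contraNneq vn => ->.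
pose c (i : (V + V)%type) := match i with inl v => x v | inr v => y v end.
pose d (i : (V + V)%type) := match i with inl v => da v | inr v => db v end.
have [xs0 [xs1 xs2]] := xs.
have [yt0 [yt1 yt2]] := yt.
have pt : forall r, (forall i, 0 <= c i + r * d i) ->
    (exists i, d i != 0 /\ c i + r * d i = 0) -> line x da r <> line y db r ->
    Concl K p.
  move=> r hpos [i [di ci]] ne.
  have isa : in_simplex s (line x da r).
    split; [|split].
    - by move=> v; rewrite /line ffunE; exact: (hpos (inl v)).
    - by rewrite sum_line xs1 dir_sum mulr0 addr0.
    - move=> v vn; rewrite /line ffunE xs2 //.
      have -> : da v = 0 by apply/eqP; apply: contraR vn; exact: suppa.
      by rewrite mulr0 addr0.
  have isb : in_simplex t (line y db r).
    split; [|split].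
    - by move=> v; rewrite /line ffunE; exact: (hpos (inr v)).
    - by rewrite sum_line yt1 dir_sum mulr0 addr0.
    - move=> v vn; rewrite /line ffunE yt2 //.
      have -> : db v = 0 by apply/eqP; apply: contraR vn; exact: suppb.
      by rewrite mulr0 addr0.
  have fe' : fmap p (line x da r) = fmap p (line y db r).
    by rewrite !fmap_line fe key.
  case: i di ci => v /= di ci.
  - apply: (finish (v := v) (a := line x da r) (b := line y db r) cK hs ht s3 (suppa v di)) => //.
    by rewrite /line ffunE.
  - apply: (finish (v := v) (a := line y db r) (b := line x da r) cK ht hs t3 (suppb v di)) => //.
    + by rewrite /line ffunE.
    + by move=> e; apply: ne.
have nzd : (exists v, da v != 0) \/ (exists v, db v != 0).
  move: wnz => /or4P [h|h|h|h].
  - by left; exists a2; rewrite /da dir_a2.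
  - by left; exists a3; rewrite /da dir_a3.
  - by right; exists b2; rewrite /db dir_a2 // oppr_eq0.
  - by right; exists b3; rewrite /db dir_a3 // oppr_eq0.
have [[i1 hi1] [i2 hi2]] : (exists i, d i < 0) /\ (exists i, 0 < d i).
  case: nzd => [[v hv]|[v hv]].
  - have [[u hu] [u' hu']] := sum0_sign (dir_sum a1 a2 a3 w0 w1) hv.
    by split; [exists (inl u)|exists (inl u')].
  - have [[u hu] [u' hu']] := sum0_sign (dir_sum b1 b2 b3 (- w2) (- w3)) hv.
    by split; [exists (inr u)|exists (inr u')].
have c0 : forall i, 0 <= c i by case.
have [t1 [t10 [hp1 [j1 [dj1 cj1]]]]] := exitL c0 (ex_intro _ i1 hi1).
have hn : exists i, - d i < 0 by exists i2; rewrite oppr_lt0.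
have [t2 [t20 [hp2 [j2 [dj2 cj2]]]]] := exitL (d := fun i => - d i) c0 hn.
have [e1|ne1] := eqVneq (line x da t1) (line y db t1); last first.
  apply: (pt t1 hp1) => //; last exact/eqP.
  by exists j1; split => //; rewrite ltr0_neq0.
have [e2|ne2] := eqVneq (line x da (- t2)) (line y db (- t2)); last first.
  apply: (pt (- t2)).
  - by move=> i; rewrite mulNr -mulrN; exact: hp2.
  - exists j2; split; last by rewrite mulNr -mulrN.
    by move: dj2; rewrite oppr_lt0 => /gt_eqF ->.
  - exact/eqP.
exfalso; apply: nxy; apply/ffunP => v.
have f1 : x v + t1 * da v = y v + t1 * db v.
  by move/(congr1 (fun f : {ffun V -> R} => f v)): e1; rewrite /line !ffunE => h; exact: h.
have f2 : x v - t2 * da v = y v - t2 * db v.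
  by move/(congr1 (fun f : {ffun V -> R} => f v)): e2; rewrite /line !ffunE !mulNr => h; exact: h.
have [t0|tn0] := eqVneq (t1 + t2) 0.
  by move: f1; rewrite (_ : t1 = 0) ?mul0r ?addr0 //; lra.
have hm : (t1 + t2) * (da v - db v) = 0.
  rewrite mulrDl !mulrBr; lra.
move/eqP: hm; rewrite mulf_eq0 (negbTE tn0) /= subr_eq0 => /eqP hd.
by move: f1; rewrite hd; lra.
Qed.

Theorem lemma1 (R : realType) (V : finType) (K : {set {set V}})
  (p : V -> 'rV[R]_3) :
  is_complex K -> dim2 K -> complex_connected K -> polyhedron K p ->
  (~ embedded K p <->
   exists (s1 s2 : {set V}) (u1 u2 : {ffun V -> R}),
     [/\ s1 \in K, s2 \in K, (#|s1| <= 2)%N,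
         in_simplex s1 u1 /\ in_simplex s2 u2 &
         u1 <> u2 /\ fmap p u1 = fmap p u2]).
Proof.
move=> cK [d3 _] _ _; split.
- move=> nemb; apply: NNPP => nc; apply: nemb => x y [s hs xs] [t ht yt] fe.
  apply: NNPP => nxy; apply: nc.
  exact: (core cK d3 hs ht xs yt nxy fe).
- move=> [s1 [s2 [u1 [u2 [h1 h2 _ [i1 i2] [ne fe]]]]]] emb.
  apply: ne; apply: emb => //; [exists s1 | exists s2] => //.
Qed.
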